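(* For every integer $n>1$, the series $\sum_{k=1}^\infty c^*_n(k)/k$ converges, and $$\log\Phi^*_n(1)=\Lambda^*(n)=-\sum_{k=1}^\infty\frac{c^*_n(k)}{k}.$$
   Context: $\zeta_n=e^{2\pi i/n}$. $d\mid\mid n$ means $d\mid n$ and $\gcd(d,n/d)=1$; $(j,n)_*=\max\{d: d\mid j,\ d\mid\mid n\}$; $\Phi^*_n(x)=\prod_{1\le j\le n,\ (j,n)_*=1}(x-\zeta_n^j)$; $c^*_n(k)=\sum_{1\le j\le n,\ (j,n)_*=1}\zeta_n^{jk}$ is the unitary Ramanujan sum. $\Lambda^*(n)=a\log p$ if $n=p^a$ is a prime power ($a\ge1$), and $0$ otherwise. *)

(* Defs.v *)
From Stdlib Require Import Reals Arith List.
Import ListNotations.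
Open Scope R_scope.

Definition C : Type := (R * R)%type.
Definition C0 : C := (0, 0).
Definition C1 : C := (1, 0).
Definition Cadd (z w : C) : C := (fst z + fst w, snd z + snd w).
Definition Csub (z w : C) : C := (fst z - fst w, snd z - snd w).
Definition Cmul (z w : C) : C :=
  (fst z * fst w - snd z * snd w, fst z * snd w + snd z * fst w).

Definition zeta_pow (n m : nat) : C :=
  (cos (2 * PI * INR m / INR n), sin (2 * PI * INR m / INR n)).

Definition unitary_divb (d n : nat) : bool :=
  (Nat.eqb (n mod d) 0%nat && Nat.eqb (Nat.gcd d (n / d)) 1%nat)%bool.

(* (j,n)_* = max { d : d | j, d || n }; the candidates d lie in 1..n (n >= 1). *)
Definition ugcd (j n : nat) : nat :=
  fold_right Nat.max 0%nat
    (filter (fun d => (Nat.eqb (j mod d) 0%nat && unitary_divb d n)%bool) (seq 1 n)).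

Definition unitary_units (n : nat) : list nat :=
  filter (fun j => Nat.eqb (ugcd j n) 1%nat) (seq 1 n).

Definition cstar (n k : nat) : C :=
  fold_right Cadd C0 (map (fun j => zeta_pow n (j * k)%nat) (unitary_units n)).

Definition PhiStar_at1 (n : nat) : C :=
  fold_right Cmul C1 (map (fun j => Csub C1 (zeta_pow n j)) (unitary_units n)).

Definition primeb (p : nat) : bool :=
  (Nat.leb 2 p && forallb (fun d => negb (Nat.eqb (p mod d) 0%nat)) (seq 2 (p - 2)%nat))%bool.

(* Lambda*(n) = a log p if n = p^a (p prime, a >= 1), 0 otherwise.
   Written as a sum over all candidate pairs (p, a) with 2 <= p <= n, 1 <= a <= n;
   by uniqueness of the prime-power representation at most one term is nonzero. *)
Definition LambdaStar (n : nat) : R :=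
  fold_right Rplus 0
    (map (fun p =>
       fold_right Rplus 0
         (map (fun a =>
            if (primeb p && Nat.eqb n (p ^ a)%nat)%bool then INR a * ln (INR p) else 0)
            (seq 1 n)))
       (seq 2 n)).

(* partial sums sum_{k=1}^{N+1} of the real / imaginary parts of c*_n(k)/k *)
Definition cstar_series_re (n N : nat) : R :=
  sum_f_R0 (fun i => fst (cstar n (S i)) / INR (S i)) N.
Definition cstar_series_im (n N : nat) : R :=
  sum_f_R0 (fun i => snd (cstar n (S i)) / INR (S i)) N.

(* Main.v *)
Require Import Defs.
From Stdlib Require Import Reals Arith List Lra Lia.
From mathcomp Require all_boot all_order all_algebra Rstruct complex zify.
Open Scope R_scope.
Lemma cos_ne1 x : 0 < x -> x < 2 * PI -> cos x <> 1.
Proof.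
  intros H1 H2 H. replace x with (2 * (x / 2)) in H by field.
  rewrite cos_2a_sin in H. assert (0 < sin (x / 2)) by (apply sin_gt_0; lra). nra.
Qed.
Definition th (n : nat) : R := 2 * PI / INR n.
Lemma arg_eq n m : 2 * PI * INR m / INR n = INR m * th n.
Proof. unfold th, Rdiv. ring. Qed.
Lemma arg_bounds n k : (0 < k)%nat -> (k < n)%nat -> 0 < INR k * th n < 2 * PI.
Proof.
  unfold th.
  intros Hk Hn. assert (0 < INR k) by (apply lt_0_INR; lia).
  assert (INR k < INR n) by (apply lt_INR; lia). pose proof PI_RGT_0.
  split.
  - apply Rmult_lt_0_compat; auto. unfold Rdiv. apply Rmult_lt_0_compat; [lra|]. apply Rinv_0_lt_compat; lra.
  - replace (INR k * (2 * PI / INR n)) with (2 * PI * (INR k / INR n)) by (field; lra).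
    assert (INR k / INR n < 1). { apply (Rmult_lt_reg_r (INR n)); [lra|]. field_simplify; lra. }
    nra.
Qed.
Lemma arg_full n : (0 < n)%nat -> INR n * th n = 2 * PI.
Proof. unfold th. intros Hn. assert (0 < INR n) by (apply lt_0_INR; lia). field; lra. Qed.

Fixpoint Hn (m : nat) : R := match m with O => 0 | S k => Hn k + / INR (S k) end.

Lemma Hn_S k : Hn (S k) = Hn k + / INR (S k).
Proof. reflexivity. Qed.

Lemma ln_le_xm1 y : 0 < y -> ln y <= y - 1.
Proof. intros Hy. pose proof (exp_ineq1_le (ln y)). rewrite exp_ln in H; lra. Qed.

Lemma ln_sub_le x y : 0 < x -> 0 < y -> ln x - ln y <= x / y - 1.
Proof.
  intros Hx Hy. assert (Hy' : 0 < / y) by (apply Rinv_0_lt_compat; auto).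
  replace (ln x - ln y) with (ln (x / y)).
  - apply ln_le_xm1. unfold Rdiv. apply Rmult_lt_0_compat; auto.
  - unfold Rdiv. rewrite (ln_mult _ _ Hx Hy'). rewrite (ln_Rinv _ Hy). lra.
Qed.

Lemma INR_pos k : (0 < k)%nat -> 0 < INR k.
Proof. intros; apply lt_0_INR; auto. Qed.

Lemma step_up k : (1 <= k)%nat -> / INR (S k) <= ln (INR (S k)) - ln (INR k).
Proof.
  intros Hk. assert (Hk0 : 0 < INR k) by (apply INR_pos; lia).
  assert (Hk1 : 0 < INR (S k)) by (apply INR_pos; lia).
  pose proof (ln_sub_le _ _ Hk0 Hk1). rewrite S_INR in *.
  assert (INR k / (INR k + 1) - 1 = - / (INR k + 1)) by (field; lra). lra.
Qed.

Lemma step_lo k : ln (INR (S (S k))) - ln (INR (S k)) <= / INR (S k).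
Proof.
  assert (Hk0 : 0 < INR (S k)) by (apply INR_pos; lia).
  assert (Hk1 : 0 < INR (S (S k))) by (apply INR_pos; lia).
  pose proof (ln_sub_le _ _ Hk1 Hk0). rewrite (S_INR (S k)) in *.
  assert ((INR (S k) + 1) / INR (S k) - 1 = / INR (S k)) by (field; lra). lra.
Qed.

Lemma H_upper a d : (1 <= a)%nat -> Hn (a + d) - Hn a <= ln (INR (a + d)) - ln (INR a).
Proof.
  intros Ha. induction d as [|d IH].
  - rewrite Nat.add_0_r. lra.
  - replace (a + S d)%nat with (S (a + d)) by lia. rewrite Hn_S.
    pose proof (step_up (a + d) ltac:(lia)). lra.
Qed.

Lemma H_lower a d : ln (INR (S (a + d))) - ln (INR (S a)) <= Hn (a + d) - Hn a.
Proof.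
  induction d as [|d IH].
  - rewrite Nat.add_0_r. lra.
  - replace (a + S d)%nat with (S (a + d)) by lia. rewrite Hn_S.
    pose proof (step_lo (a + d)). lra.
Qed.

Lemma harm_lim (m : nat) (a : nat -> nat) : (0 < m)%nat ->
  (forall N, (a N * m <= S N)%nat /\ (S N < (a N + 1) * m)%nat) ->
  Un_cv (fun N => Hn (a N) - Hn (S N)) (- ln (INR m)).
Proof.
  intros Hm Ha eps Heps.
  destruct (archimed_cor1 eps Heps) as [K [HK HK0]].
  exists (K * m)%nat. intros N HN. unfold R_dist.
  destruct (Ha N) as [H1 H2].
  assert (HaK : (K <= a N)%nat).
  { destruct (le_lt_dec K (a N)) as [|Hlt]; auto.
    assert ((a N + 1) * m <= K * m)%nat by (apply Nat.mul_le_mono_r; lia). lia. }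
  set (A := INR (a N)). set (B := INR (S N)). set (M := INR m).
  assert (HA : INR K <= A) by (apply le_INR; auto).
  assert (HK1 : 0 < INR K) by (apply INR_pos; auto).
  assert (HA0 : 0 < A) by lra.
  assert (HM : 0 < M) by (apply INR_pos; auto).
  assert (HAB : A * M <= B) by (unfold A, M, B; rewrite <- mult_INR; apply le_INR; auto).
  assert (HBA : B < (A + 1) * M).
  { unfold A, M, B. replace (INR (a N) + 1) with (INR (a N + 1)) by (rewrite plus_INR; simpl; lra).
    rewrite <- mult_INR; apply lt_INR; auto. }
  assert (HB : 0 < B) by (unfold B; apply INR_pos; lia).
  assert (Hinv : / A <= / INR K) by (apply Rinv_le_contravar; lra).
  assert (Hab : (a N <= S N)%nat) by nia.
  pose proof (H_upper (a N) (S N - a N) ltac:(lia)) as Hu.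
  pose proof (H_lower (a N) (S N - a N)) as Hl.
  replace (a N + (S N - a N))%nat with (S N) in Hu, Hl by lia.
  fold A B in Hu. rewrite (S_INR (S N)), (S_INR (a N)) in Hl. fold A B in Hl.
  assert (U : ln B - ln A - ln M < / A).
  { assert (E : ln B - ln A - ln M = ln B - ln (A * M)) by (rewrite ln_mult; lra).
    rewrite E. pose proof (ln_sub_le B (A * M) HB ltac:(nra)).
    assert (B / (A * M) < (A + 1) * M / (A * M)).
    { unfold Rdiv. apply Rmult_lt_compat_r; auto. apply Rinv_0_lt_compat; nra. }
    assert ((A + 1) * M / (A * M) = 1 + / A) by (field; lra). lra. }
  assert (Lo : ln M + ln (A + 1) - ln (B + 1) < / A).
  { assert (E : ln M + ln (A + 1) - ln (B + 1) = ln (M * (A + 1)) - ln (B + 1)) by (rewrite ln_mult; lra).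
    rewrite E. pose proof (ln_sub_le (M * (A + 1)) (B + 1) ltac:(nra) ltac:(lra)).
    assert (M * (A + 1) / (B + 1) <= M * (A + 1) / (A * M + 1)).
    { unfold Rdiv. apply Rmult_le_compat_l; [nra|]. apply Rinv_le_contravar; nra. }
    assert (M * (A + 1) / (A * M + 1) - 1 = (M - 1) / (A * M + 1)) by (field; nra).
    assert ((M - 1) / (A * M + 1) < / A).
    { apply (Rmult_lt_reg_r (A * (A * M + 1))). nra.
      replace ((M - 1) / (A * M + 1) * (A * (A * M + 1))) with ((M - 1) * A) by (field; nra).
      replace (/ A * (A * (A * M + 1))) with (A * M + 1) by (field; nra). nra. }
    lra. }
  apply Rabs_def1; lra.
Qed.

Module H.
Import all_boot all_order all_algebra Rstruct complex zify.
Import Order.TTheory GRing.Theory Num.Theory.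
Local Open Scope ring_scope.

Lemma seqE a b : List.seq a b = iota a b.
Proof. by elim: b a => [|b IH] a //=; rewrite IH. Qed.
Lemma filterE T (f : T -> bool) s : List.filter f s = filter f s.
Proof. by elim: s => [|x s IH] //=; rewrite IH. Qed.
Lemma mapE T U (f : T -> U) s : List.map f s = map f s.
Proof. by elim: s => [|x s IH] //=; rewrite IH. Qed.
Lemma foldrE T U (f : T -> U -> U) x s : fold_right f x s = foldr f x s.
Proof. by elim: s => [|y s IH] //=; rewrite IH. Qed.
Lemma eqbE a b : Nat.eqb a b = (a == b).
Proof. by case: (Nat.eqb_spec a b) => [->|/eqP/negbTE ->]; rewrite ?eqxx. Qed.
Lemma maxE a b : Nat.max a b = maxn a b.
Proof. lia. Qed.
Lemma modE a b : Nat.modulo a b = (a %% b)%N.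
Proof.
case: b => [|b]; first by rewrite modn0.
symmetry; apply: (Nat.mod_unique a b.+1 (a %/ b.+1)%N (a %% b.+1)%N).
  by apply/ssrnat.ltP; rewrite ltn_mod.
by rewrite {1}(divn_eq a b.+1) mulnC.
Qed.
Lemma divE a b : Nat.div a b = (a %/ b)%N.
Proof.
case: b => [|b]; first by rewrite divn0.
symmetry; apply: (Nat.div_unique a b.+1 (a %/ b.+1)%N (a %% b.+1)%N).
  by apply/ssrnat.ltP; rewrite ltn_mod.
by rewrite {1}(divn_eq a b.+1) mulnC.
Qed.
Lemma divideE a b : Nat.divide a b <-> (a %| b)%N.
Proof. split; [by case=> z ->; apply: dvdn_mull|by case/dvdnP=> z ->; exists z]. Qed.
Lemma gcdE a b : Nat.gcd a b = gcdn a b.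
Proof.
apply: Nat.gcd_unique.
- by apply/divideE; apply: dvdn_gcdl.
- by apply/divideE; apply: dvdn_gcdr.
- by move=> q /divideE H1 /divideE H2; apply/divideE; rewrite dvdn_gcd H1 H2.
Qed.
Lemma powE a b : Nat.pow a b = (a ^ b)%N.
Proof. by elim: b => [|b IH] //=; rewrite expnS IH. Qed.
Lemma mulE a b : Nat.mul a b = (a * b)%N.
Proof. by []. Qed.

Lemma mod0E j d : Nat.eqb (Nat.modulo j d) 0 = (d %| j)%N.
Proof. by rewrite eqbE modE. Qed.

Definition Pu j n d := [&& (d %| j)%N, (d %| n)%N & gcdn d (n %/ d) == 1%N].

Lemma ugcdE j n : ugcd j n = foldr maxn 0%N (filter (Pu j n) (iota 1 n)).
Proof.
rewrite /ugcd seqE foldrE filterE.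
have -> : filter (fun d => Nat.eqb (Nat.modulo j d) 0 && unitary_divb d n) (iota 1 n) = filter (Pu j n) (iota 1 n).
  by apply: eq_filter => d; rewrite /unitary_divb !mod0E eqbE divE gcdE.
by elim: (filter _ _) => [|x s IH] //=; rewrite IH maxE.
Qed.
Lemma dummy (d:nat) : True.
Proof. done.
Qed.

Lemma foldr_max_le1 s : (foldr maxn 0%N s <= 1)%N = all (fun d => d <= 1)%N s.
Proof. by elim: s => [|x s IH] //=; rewrite geq_max IH. Qed.
Lemma foldr_max_ge x s : x \in s -> (x <= foldr maxn 0%N s)%N.
Proof.
elim: s => [|y s IH] //=; rewrite inE => /orP[/eqP->|/IH H]; first by rewrite leq_maxl.
by rewrite (leq_trans H) // leq_maxr.
Qed.

Fixpoint gsieve {T : Type} (op : T -> T -> T) (L : seq nat) (D : nat) (F : nat -> T) : T :=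
  if L is q :: L' then op (gsieve op L' D F) (gsieve op L' (D * q) F) else F D.

Definition good (n : nat) (L : seq nat) (D : nat) :=
  [&& pairwise coprime L, all (coprime D) L, (D %| n)%N & all (fun q => (q %| n)%N) L].

Definition Lq n := [seq (p ^ logn p n)%N | p <- primes n].

Lemma ugcd_eq1 j n : (0 < n)%N -> (ugcd j n == 1%N) = all (fun q => ~~ (q %| j)%N) (Lq n).
Proof.
move=> n0; rewrite ugcdE.
have H1 : 1%N \in filter (Pu j n) (iota 1 n).
  by rewrite mem_filter /Pu !dvd1n gcd1n eqxx mem_iota /= addnC addn1 ltnS.
rewrite eqn_leq (foldr_max_ge _ _ H1) andbT foldr_max_le1.
apply/allP/allP.
- move=> Hall q /mapP[p pP ->]; apply/negP => Hqj.
  have pp : prime p by move: pP; rewrite mem_primes => /and3P[].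
  have lg : (0 < logn p n)%N by rewrite logn_gt0.
  have Hq : (p ^ logn p n)%N \in filter (Pu j n) (iota 1 n).
    rewrite mem_filter /Pu Hqj pfactor_dvdnn /= mem_iota expn_gt0 prime_gt0 //=.
    rewrite add1n ltnS dvdn_leq ?pfactor_dvdnn // andbT.
    rewrite -p_part.
    have -> : (n %/ n`_p)%N = (n`_p^')%N by rewrite -{1}(partnC p n0) mulKn // part_gt0.
    exact: coprime_partC.
  have := Hall _ Hq; rewrite leqNgt => /negP; apply.
  by rewrite (leq_trans _ (leq_pexp2l (prime_gt0 pp) lg)) // expn1 prime_gt1.
- move=> Hall d; rewrite mem_filter /Pu => /andP[/and3P[Hdj Hdn Hc] Hd].
  rewrite leqNgt; apply/negP => d1.
  set p := pdiv d.
  have pp : prime p by apply: pdiv_prime.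
  have pd : (p %| d)%N by apply: pdiv_dvd.
  have d0 : (0 < d)%N by apply: ltnW.
  have nd0 : (0 < n %/ d)%N by rewrite divn_gt0 // dvdn_leq.
  have pn : (p %| n)%N by apply: dvdn_trans Hdn.
  have Hlog : logn p n = logn p d.
    rewrite -{1}(divnK Hdn) mulnC lognM // [logn p (n %/ d)](_ : _ = 0%N) ?addn0 //.
    apply/eqP; rewrite -leqn0 leqNgt logn_gt0 mem_primes pp nd0 /=.
    rewrite -prime_coprime //; apply: coprime_dvdl pd _; exact: Hc.
  have Hq : (p ^ logn p n)%N \in Lq n.
    by apply: map_f; rewrite mem_primes pp n0.
  have := Hall _ Hq; rewrite Hlog => /negP; apply.
  exact: dvdn_trans (pfactor_dvdnn p d) Hdj.
Qed.

Lemma Lq_dvd n q : q \in Lq n -> (q %| n)%N.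
Proof. by case/mapP=> p _ ->; apply: pfactor_dvdnn. Qed.

Lemma good_Lq n : (0 < n)%N -> good n (Lq n) 1.
Proof.
move=> n0; apply/and4P; split; last 2 first.
- exact: dvd1n.
- by apply/allP => q; apply: Lq_dvd.
- rewrite /Lq pairwise_map.
  have := primes_uniq n; rewrite uniq_pairwise.
  apply: sub_in_pairwise (fun p => p \in primes n) _ _ _ _ _; last by apply/allP.
  move=> p p' pP p'P /= ne; apply: coprimeXl; apply: coprimeXr.
  have pp : prime p by move: pP; rewrite mem_primes => /and3P[].
  have pp' : prime p' by move: p'P; rewrite mem_primes => /and3P[].
  by rewrite prime_coprime // dvdn_prime2.
- by apply/allP => q _; apply: coprime1n.
Qed.

Lemma Lq_nil n : (1 < n)%N -> Lq n <> [::].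
Proof.
move=> n1; rewrite /Lq; case E: (primes n) => [|//].
by move/eqP: E; rewrite primes_eq0 ltnNge n1.
Qed.
Lemma good_cons n q L D : good n (q :: L) D -> good n L D /\ good n L (D * q).
Proof.
rewrite /good /= => /and4P[/andP[Hq HL] /andP[HDq HDL] HDn /andP[Hqn HLn]].
rewrite HL HDL HDn HLn /=; split => //.
have -> : (D * q %| n)%N by rewrite Gauss_dvd // HDn Hqn.
rewrite !andbT.
by apply/allP => x Hx; rewrite coprimeMl (allP HDL x Hx) (allP Hq x Hx).
Qed.

Lemma sieve_sum (V : zmodType) (s : seq nat) L D (f : nat -> V) :
  pairwise coprime L -> all (coprime D) L ->
  \sum_(j <- s | (D %| j)%N && all (fun q => ~~ (q %| j)%N) L) f j =
  gsieve (fun a b => a - b) L D (fun D => \sum_(j <- s | (D %| j)%N) f j).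
Proof.
elim: L D => [|q L IH] D /=.
  by move=> _ _; apply: eq_bigl => j; rewrite andbT.
move=> /andP[Hq HL] /andP[HDq HDL].
rewrite -IH // -IH //; last first.
  by apply/allP => x Hx; rewrite coprimeMl (allP HDL x Hx) (allP Hq x Hx).
rewrite [X in _ = X - _](bigID (fun j => (q %| j)%N)) /=.
rewrite [X in _ = X + _ - _](_ : _ = \sum_(j <- s | (D * q %| j)%N && all (fun q => ~~ (q %| j)%N) L) f j); last first.
  by apply: eq_bigl => j; rewrite Gauss_dvd // andbAC.
rewrite addrAC subrr add0r; apply: eq_bigl => j.
by rewrite andbA andbAC.
Qed.

Lemma sieve_prod (K : fieldType) (s : seq nat) L D (f : nat -> K) :
  (forall j, j \in s -> f j != 0) ->
  pairwise coprime L -> all (coprime D) L ->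
  \prod_(j <- s | (D %| j)%N && all (fun q => ~~ (q %| j)%N) L) f j =
  gsieve (fun a b => a / b) L D (fun D => \prod_(j <- s | (D %| j)%N) f j).
Proof.
move=> Hf; elim: L D => [|q L IH] D /=.
  by move=> _ _; apply: eq_bigl => j; rewrite andbT.
move=> /andP[Hq HL] /andP[HDq HDL].
rewrite -IH // -IH //; last first.
  by apply/allP => x Hx; rewrite coprimeMl (allP HDL x Hx) (allP Hq x Hx).
rewrite [X in _ = X / _](bigID (fun j => (q %| j)%N)) /=.
rewrite [X in _ = X * _ / _](_ : _ = \prod_(j <- s | (D * q %| j)%N && all (fun q => ~~ (q %| j)%N) L) f j); last first.
  by apply: eq_bigl => j; rewrite Gauss_dvd // andbAC.
rewrite mulrAC divff ?mul1r.
  by apply: eq_bigl => j; rewrite andbA andbAC.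
rewrite prodf_seq_neq0; apply/allP => j Hj; apply/implyP => _; exact: Hf.
Qed.

Lemma gsieve_ext n T op L D (F G : nat -> T) : good n L D ->
  (forall x, (x %| n)%N -> F x = G x) -> gsieve op L D F = gsieve op L D G.
Proof.
elim: L D => [|q L IH] D /=; first by move=> /and4P[_ _ HD _] H; apply: H.
by move=> /good_cons[H1 H2] H; rewrite (IH _ H1 H) (IH _ H2 H).
Qed.

Lemma gsieve_morph n T1 T2 op1 op2 (f : T1 -> T2) (P : T1 -> Prop) L D F :
  good n L D -> (forall x, (x %| n)%N -> P (F x)) ->
  (forall a b, P a -> P b -> P (op1 a b) /\ f (op1 a b) = op2 (f a) (f b)) ->
  P (gsieve op1 L D F) /\ f (gsieve op1 L D F) = gsieve op2 L D (fun x => f (F x)).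
Proof.
move=> + HF Hop; elim: L D => [|q L IH] D /=.
  by move=> /and4P[_ _ HD _]; split => //; apply: HF.
move=> /good_cons[/IH[P1 E1] /IH[P2 E2]].
by have [Pop Eop] := Hop _ _ P1 P2; split => //; rewrite Eop E1 E2.
Qed.

Lemma gsieve_const (V : zmodType) L D (c : V) :
  gsieve (fun a b => a - b) L D (fun _ => c) = if L is [::] then c else 0.
Proof.
elim: L D => [|q L IH] D //=.
by rewrite !IH subrr.
Qed.

Lemma gsieve_shift T op L D c (F : nat -> T) :
  gsieve op L (D * c) F = gsieve op L D (fun x => F (x * c)).
Proof.
elim: L D => [|q L IH] D //=.
by rewrite mulnAC !IH.
Qed.


Definition toC (z : Defs.C) : R[i] := Complex z.1 z.2.
Lemma toC_mul z w : toC (Cmul z w) = toC z * toC w.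
Proof. case: z => a b; case: w => c d. rewrite /toC /Cmul /=.
by rewrite RminusE !RmultE RplusE.
Qed.
Lemma toC_add z w : toC (Cadd z w) = toC z + toC w.
Proof. case: z => a b; case: w => c d. rewrite /toC /Cadd /=.
by rewrite !RplusE.
Qed.
Lemma toC_sub z w : toC (Csub z w) = toC z - toC w.
Proof. case: z => a b; case: w => c d. rewrite /toC /Csub /=.
by rewrite !RminusE.
Qed.
Lemma toC0 : toC Defs.C0 = 0. Proof. by []. Qed.
Lemma toC1 : toC Defs.C1 = 1. Proof. by []. Qed.

Definition cis (x : R) : R[i] := Complex (cos x) (sin x).
Lemma cisD a b : cis (Rplus a b) = cis a * cis b.
Proof.
rewrite /cis cos_plus sin_plus Rplus_comm.
exact: (toC_mul (cos a, sin a) (cos b, sin b)).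
Qed.
Lemma cisn x m : cis (Rmult (INR m) x) = cis x ^+ m.
Proof.
elim: m => [|m IH].
  by rewrite /= Rmult_0_l /cis cos_0 sin_0.
rewrite S_INR Rmult_plus_distr_r Rmult_1_l cisD IH exprSr.
by [].
Qed.
Lemma toC_zeta n m : toC (zeta_pow n m) = cis (th n) ^+ m.
Proof. by rewrite /toC /zeta_pow /= arg_eq -cisn. Qed.

Lemma prim_w n : (0 < n)%N -> n.-primitive_root (cis (th n)).
Proof.
move=> n0; apply/andP; split => //; apply/forallP => i.
rewrite unity_rootE -cisn.
have [Ei|ne] := eqVneq i.+1 n.
  rewrite Ei arg_full; last by apply/ssrnat.ltP.
  by rewrite /cis cos_2PI sin_2PI eqxx.
apply/eqP/negbTE/eqP => E.
have : cos (INR i.+1 * th n) = 1%R := congr1 (@complex.Re _) E.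
have lt : (i.+1 < n)%N by rewrite ltn_neqAle ne ltn_ord.
have [H1 H2] := arg_bounds n i.+1 (ssrnat.ltP (ltn0Sn i)) (ssrnat.ltP lt).
exact: cos_ne1 H1 H2.
Qed.


Lemma sum_iota1 (V : zmodType) m (F : nat -> V) :
  \sum_(i <- iota 1 m) F i = \sum_(i < m) F i.+1.
Proof.
have -> : iota 1 m = map (addn 1) (iota 0 m) by rewrite -iotaDl.
rewrite big_map.
have -> : iota 0 m = index_iota 0 m by rewrite /index_iota subn0.
by rewrite big_mkord.
Qed.

Lemma prod_iota1 (K : comNzRingType) m (F : nat -> K) :
  \prod_(i <- iota 1 m) F i = \prod_(i < m) F i.+1.
Proof.
have -> : iota 1 m = map (addn 1) (iota 0 m) by rewrite -iotaDl.
rewrite big_map.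
have -> : iota 0 m = index_iota 0 m by rewrite /index_iota subn0.
by rewrite big_mkord.
Qed.

Lemma geom_sum (K : fieldType) (u : K) m k : m.-primitive_root u ->
  \sum_(i <- iota 1 m) u ^+ (i * k) = if (m %| k)%N then m%:R else 0.
Proof.
move=> Hu; have m0 := prim_order_gt0 Hu.
set v := u ^+ k.
have E : \sum_(i <- iota 1 m) u ^+ (i * k) = v * \sum_(i < m) v ^+ i.
  rewrite sum_iota1 mulr_sumr; apply: eq_bigr => i _.
  by rewrite mulnC exprM -exprS.
rewrite E (prim_order_dvd Hu); case: ifP => [/eqP v1|v1].
  rewrite /v v1 mul1r; under eq_bigr do rewrite expr1n.
  by rewrite sumr_const card_ord.
have vm : v ^+ m = 1.
  by rewrite /v -exprM mulnC exprM (prim_expr_order Hu) expr1n.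
have : (v - 1) * \sum_(i < m) v ^+ i = 0 by rewrite -subrX1 vm subrr.
move/eqP; rewrite mulf_eq0 subr_eq0 -/v v1 /= => /eqP ->.
by rewrite mulr0.
Qed.

Lemma cyclo_prod (K : fieldType) (u : K) m : m.-primitive_root u ->
  \prod_(i <- iota 1 m.-1) (1 - u ^+ i) = m%:R.
Proof.
move=> Hu; have m0 := prim_order_gt0 Hu.
have := factor_Xn_sub_1 Hu.
case: m m0 Hu => [//|m] _ Hu /=.
rewrite big_nat_recl // expr0 subrX1.
move/(mulfI (negbT (polyXsubC_eq0 1))) => E.
have := congr1 (fun p => p.[1]) E; rewrite horner_prod horner_sum /=.
under eq_bigr do rewrite hornerXsubC.
under [X in _ = X]eq_bigr do rewrite hornerXn expr1n.
rewrite sumr_const card_ord => <-.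
by rewrite prod_iota1 big_mkord.
Qed.

Lemma iota_last a n : iota a n.+1 = rcons (iota a n) (a + n)%N.
Proof. by rewrite -addn1 iotaD cats1. Qed.

Lemma filter_dvd_iota D m : (0 < D)%N ->
  filter (dvdn D) (iota 1 (D * m)) = map (muln D) (iota 1 m).
Proof.
case: D => // d _; elim: m => [|m IH]; first by rewrite muln0.
rewrite mulnS addnC iotaD filter_cat IH (iota_last 1 m) map_rcons -cats1; congr (_ ++ _).
rewrite iota_last filter_rcons.
rewrite (_ : (1 + d.+1 * m + d)%N = (d.+1 * (1 + m))%N); last first.
  by lia.
rewrite dvdn_mulr //.
rewrite (_ : filter _ _ = [::]) //.
rewrite -(filter_pred0 (iota (1 + d.+1 * m) d)); apply: eq_in_filter => x.
rewrite mem_iota => /andP[h1 h2] /=; apply/negP => Dx.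
have : (d.+1 %| x - d.+1 * m)%N by rewrite dvdn_sub // dvdn_mulr.
have xp : (0 < x - d.+1 * m)%N by lia.
move/(dvdn_leq xp) => h3; lia.
Qed.

Lemma filter_dvd_iota1 D m : (0 < D)%N -> (0 < m)%N ->
  filter (dvdn D) (iota 1 (D * m).-1) = map (muln D) (iota 1 m.-1).
Proof.
move=> D0 m0; have := filter_dvd_iota D m D0.
have Dm0 : (0 < D * m)%N by rewrite muln_gt0 D0.
case E1: (D * m)%N Dm0 => [//|k] _; case E2: m m0 E1 => [//|m'] _ E1.
rewrite [k.+1.-1]/= [m'.+1.-1]/=.
rewrite !iota_last filter_rcons map_rcons add1n -E1 dvdn_mulr //.
by move/rcons_inj => [].
Qed.

Lemma toC_fold_add T (s : list T) (f : T -> Defs.C) :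
  toC (fold_right Cadd Defs.C0 (List.map f s)) = \sum_(j <- s) toC (f j).
Proof. by elim: s => [|x s IH]; rewrite ?big_nil ?big_cons //= toC_add IH. Qed.

Lemma toC_fold_mul T (s : list T) (f : T -> Defs.C) :
  toC (fold_right Cmul Defs.C1 (List.map f s)) = \prod_(j <- s) toC (f j).
Proof. by elim: s => [|x s IH]; rewrite ?big_nil ?big_cons //= toC_mul IH. Qed.

Lemma unitsE n : (0 < n)%N ->
  unitary_units n = filter (fun j => all (fun q => ~~ (q %| j)%N) (Lq n)) (iota 1 n).
Proof.
move=> n0; rewrite /unitary_units seqE filterE; apply: eq_in_filter => j _.
by rewrite eqbE ugcd_eq1.
Qed.

Definition cs n k : R := gsieve (fun a b : R => a - b) (Lq n) 1
  (fun D => if (n %/ D %| k)%N then ((n %/ D)%N)%:R else 0).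

Lemma cstar_toC n k : (1 < n)%N -> toC (cstar n k) = real_complex R (cs n k).
Proof.
move=> n1; have n0 : (0 < n)%N by apply: ltnW.
have Hw := prim_w n n0.
rewrite /cstar toC_fold_add unitsE // big_filter.
under eq_bigr do rewrite toC_zeta mulE.
rewrite (eq_bigl (fun j => (1 %| j)%N && all (fun q => ~~ (q %| j)%N) (Lq n))); last first.
  by move=> j; rewrite dvd1n.
have /and4P[pw cp _ _] := good_Lq n n0.
rewrite sieve_sum //.
rewrite (@gsieve_ext n _ _ _ _ _ (fun D => real_complex R ((if (n %/ D %| k)%N then ((n %/ D)%N)%:R else 0) : R)) (good_Lq n n0)); last first.
  move=> D Dn; have D0 : (0 < D)%N by apply: dvdn_gt0 n0 Dn.
  set m := (n %/ D)%N.
  have nE : n = (D * m)%N by rewrite /m mulnC divnK.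
  have m0 : (0 < m)%N by rewrite /m divn_gt0 // dvdn_leq.
  rewrite -big_filter {1}nE filter_dvd_iota // big_map.
  have Hu : m.-primitive_root (cis (th n) ^+ D).
    have nm : (n %/ m)%N = D by rewrite {1}nE mulnK.
    rewrite -nm; have := dvdn_prim_root Hw (m := m); apply; by rewrite {1}nE dvdn_mull.
  under eq_bigr do rewrite -mulnA exprM.
  rewrite (@geom_sum _ _ m k Hu); case: ifP => // _.
  by rewrite -(rmorph_nat (real_complex R)).
have := @gsieve_morph n _ _ (fun a b : R => a - b) (fun a b => a - b) (real_complex R) (fun _ => True) _ _
  (fun D => if (n %/ D %| k)%N then ((n %/ D)%N)%:R else 0) (good_Lq n n0) (fun _ _ => I).
case.
  by move=> a b _ _; split => //; rewrite rmorphB.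
by move=> _ <-.
Qed.

Lemma fst_cstar n k : (1 < n)%N -> fst (cstar n k) = cs n k.
Proof. by move=> n1; have := congr1 (@complex.Re _) (cstar_toC n k n1). Qed.
Lemma snd_cstar n k : (1 < n)%N -> snd (cstar n k) = 0.
Proof. by move=> n1; have := congr1 (@complex.Im _) (cstar_toC n k n1). Qed.

Notation sub := (fun a b : R => a - b).

Lemma gsD L D (F G : nat -> R) :
  gsieve sub L D (fun x => F x + G x) = gsieve sub L D F + gsieve sub L D G.
Proof. by elim: L D => [|q L IH] D //=; rewrite !IH opprD addrACA. Qed.

Lemma gsZ L D (F : nat -> R) c :
  gsieve sub L D (fun x => F x * c) = gsieve sub L D F * c.
Proof. by elim: L D => [|q L IH] D //=; rewrite !IH mulrBl. Qed.

Lemma gsN L D (F : nat -> R) :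
  gsieve sub L D (fun x => - F x) = - gsieve sub L D F.
Proof. by elim: L D => [|q L IH] D //=; rewrite !IH opprB opprK addrC. Qed.

Lemma gs_sumf L D (F : nat -> nat -> R) N :
  gsieve sub L D (fun x => sum_f_R0 (fun i => F i x) N) =
  sum_f_R0 (fun i => gsieve sub L D (F i)) N.
Proof.
elim: N => [|N IH] //=.
by rewrite RplusE gsD IH.
Qed.

Lemma gs_lim n L D (F : nat -> nat -> R) (G : nat -> R) : good n L D ->
  (forall x, (x %| n)%N -> Un_cv (fun N => F N x) (G x)) ->
  Un_cv (fun N => gsieve sub L D (F N)) (gsieve sub L D G).
Proof.
elim: L D => [|q L IH] D /=; first by move=> /and4P[_ _ HD _] H; apply: H.
move=> /good_cons[H1 H2] H.
exact: (CV_minus _ _ _ _ (IH _ H1 H) (IH _ H2 H)).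
Qed.

Lemma sumS (f : nat -> R) N : sum_f_R0 f (S N) = Rplus (sum_f_R0 f N) (f (S N)).
Proof. by []. Qed.

Lemma sum_mult m N : (0 < m)%N ->
  sum_f_R0 (fun i => Rmult (if (m %| i.+1)%N then INR m else 0) (Rinv (INR i.+1))) N
  = Hn (N.+1 %/ m).
Proof.
move=> m0; elim: N => [|N IH].
  rewrite /= divnS // div0n addn0.
  case E: (m %| 1)%N; last by rewrite /= Rmult_0_l.
  move: E; rewrite dvdn1 => /eqP ->; rewrite /=; lra.
rewrite sumS IH (divnS N.+1 m0).
case E: (m %| N.+2)%N; last by rewrite add0n Rmult_0_l Rplus_0_r.
rewrite add1n Hn_S; congr Rplus.
have mq : (N.+2 = (N.+2 %/ m) * m)%N by rewrite divnK.
have q1 : (N.+2 %/ m = (N.+1 %/ m).+1)%N by rewrite (divnS N.+1 m0) E.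
rewrite -q1 {1}mq mult_INR.
have : INR m <> 0%R by apply: not_0_INR; apply/eqP; rewrite -lt0n.
have : INR (N.+2 %/ m) <> 0%R.
  apply: not_0_INR; apply/eqP; rewrite -lt0n divn_gt0 //; apply: dvdn_leq => //.
move=> h1 h2; field; split => //.
Qed.

Lemma gsieve_cons T op q L D (F : nat -> T) :
  gsieve op (q :: L) D F = op (gsieve op L D F) (gsieve op L (D * q) F).
Proof. by []. Qed.

Lemma gsieve_eq T op L D (F G : nat -> T) : (forall x, F x = G x) ->
  gsieve op L D F = gsieve op L D G.
Proof. by move=> H; elim: L D => [|q L IH] D //=; rewrite !IH. Qed.

Lemma series_re_lim n : (1 < n)%N ->
  Un_cv (cstar_series_re n) (gsieve sub (Lq n) 1 (fun D => - ln (INR (n %/ D)))).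
Proof.
move=> n1; have n0 : (0 < n)%N by apply: ltnW.
have gd := good_Lq n n0.
apply: (Un_cv_ext (fun N => gsieve sub (Lq n) 1 (fun D => Hn (N.+1 %/ (n %/ D)) - Hn N.+1))).
  move=> N; rewrite gsD gsieve_const; case E: (Lq n) => [|q L]; first by move: (Lq_nil n n1); rewrite E.
  rewrite -E addr0 /cstar_series_re.
  rewrite (@gsieve_ext n _ _ _ _ _ (fun D => sum_f_R0 (fun i => Rmult (if (n %/ D %| i.+1)%N then INR (n %/ D) else 0) (Rinv (INR i.+1))) N) gd); last first.
    move=> D Dn; rewrite sum_mult // divn_gt0 ?(dvdn_gt0 n0 Dn) //; exact: dvdn_leq.
  rewrite gs_sumf; apply: PartSum.sum_eq => i _; symmetry.
  rewrite fst_cstar // /cs /Rdiv RmultE -gsZ; apply: gsieve_eq => D.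
  by case: ifP => _; rewrite RmultE ?INRE.
apply: (@gs_lim n _ _ _ _ gd) => D Dn.
have D0 : (0 < D)%N by apply: dvdn_gt0 n0 Dn.
have m0 : (0 < n %/ D)%N by rewrite divn_gt0 //; exact: dvdn_leq.
apply: (harm_lim (n %/ D) (fun N => N.+1 %/ (n %/ D))%N (ssrnat.ltP m0)) => N.
split; apply/ssrnat.leP.
  by rewrite leq_trunc_div.
by have := ltn_ceil N.+1 m0; lia.
Qed.

Lemma n_ppow n p : (0 < n)%N -> primes n = [:: p] -> n = (p ^ logn p n)%N.
Proof.
move=> n0 E; rewrite {1}(prod_prime_decomp n0) prime_decompE E big_cons big_nil.
by rewrite muln1.
Qed.

Lemma ln_INR_mul x y : (0 < x)%N -> (0 < y)%N -> ln (INR (x * y)) = Rplus (ln (INR x)) (ln (INR y)).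
Proof.
move=> x0 y0; rewrite mult_INR ln_mult //; apply: lt_0_INR; exact/ssrnat.ltP.
Qed.

Lemma gs_ln n : (1 < n)%N ->
  gsieve sub (Lq n) 1 (fun D => ln (INR (n %/ D))) =
  if size (primes n) == 1%N then ln (INR n) else 0.
Proof.
move=> n1; have n0 : (0 < n)%N by apply: ltnW.
have gd := good_Lq n n0.
case E: (primes n) => [|p [|p' ps]].
- by move/eqP: E; rewrite primes_eq0 ltnNge n1.
- rewrite /Lq E /= mul1n divn1 -(n_ppow n p n0 E) divnn n0 /= ln_1.
  by rewrite subr0.
- rewrite (@gsieve_ext n _ _ _ _ _ (fun D => ln (INR n) + - ln (INR D)) gd); last first.
    move=> D Dn; have D0 : (0 < D)%N by apply: dvdn_gt0 n0 Dn.
    rewrite -{2}(divnK Dn) ln_INR_mul //; last by rewrite divn_gt0 // dvdn_leq.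
    by rewrite -RplusE -RoppE; lra.
  set q := (p ^ logn p n)%N; set q' := (p' ^ logn p' n)%N.
  set L := map (fun p => p ^ logn p n)%N ps.
  have LE : Lq n = [:: q, q' & L] by rewrite /Lq E.
  rewrite gsD LE gsieve_const gsN gsieve_cons.
  rewrite LE in gd; have [gd1 _] := good_cons _ _ _ _ gd.
  have pP : p \in primes n by rewrite E inE eqxx.
  have q0 : (0 < q)%N.
    by rewrite expn_gt0 prime_gt0 //; move: pP; rewrite mem_primes => /and3P[].
  rewrite gsieve_shift.
  rewrite (@gsieve_ext n _ _ _ _ (fun x => ln (INR (x * q))) (fun x => ln (INR x) + ln (INR q)) gd1); last first.
    move=> x xn; rewrite ln_INR_mul ?RplusE //; by apply: dvdn_gt0 n0 xn.
  rewrite gsD gsieve_const.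
  by rewrite addr0 subrr oppr0 add0r.
Qed.

Lemma foldR_sum T (s : list T) (f : T -> R) :
  fold_right Rplus 0%R (List.map f s) = \sum_(x <- s) f x.
Proof. by elim: s => [|x s IH]; rewrite ?big_nil ?big_cons //= IH RplusE. Qed.

Lemma forallbE T (f : T -> bool) s : forallb f s = all f s.
Proof. by elim: s => [|x s IH] //=; rewrite IH. Qed.

Lemma lebE a b : Nat.leb a b = (a <= b)%N.
Proof. by apply/idP/idP => [/Nat.leb_le/ssrnat.leP|/ssrnat.leP/Nat.leb_le]. Qed.

Lemma primebE p : primeb p = prime p.
Proof.
rewrite /primeb lebE forallbE seqE.
have -> : all (fun d => ~~ Nat.eqb (p mod d)%coq_nat 0) (iota 2 (p - 2)) =
          all (fun d => ~~ (d %| p)%N) (iota 2 (p - 2)).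
  by apply: eq_all => d; rewrite mod0E.
apply/idP/primeP.
- case/andP=> p2 /allP H; split => // d dp.
  have p0 : (0 < p)%N by apply: leq_trans p2.
  have d0 : (0 < d)%N by apply: dvdn_gt0 p0 dp.
  have dle : (d <= p)%N by apply: dvdn_leq.
  rewrite /= -implyNb; apply/implyP => d1; rewrite eqn_leq dle /= leqNgt; apply/negP => dlt.
  have : d \in iota 2 (p - 2) by rewrite mem_iota; apply/andP; split; lia.
  by move/H; rewrite dp.
- case=> p1 H; rewrite p1 /=; apply/allP => d; rewrite mem_iota => /andP[d2 dlt].
  apply/negP => dp; case/pred2P: (H d dp) => dE; lia.
Qed.

Lemma sum_single (s : seq nat) x (F : nat -> R) : x \in s -> uniq s ->
  (forall i, i \in s -> i != x -> F i = 0) -> \sum_(i <- s) F i = F x.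
Proof.
move=> xs us H; rewrite (bigD1_seq x) //= big1_seq ?addr0 //.
by move=> i /andP[ix ins]; apply: H.
Qed.

Lemma ppow_primes n p a : prime p -> (0 < a)%N -> n = (p ^ a)%N -> primes n = [:: p].
Proof. by move=> pp a0 ->; rewrite primesX // primes_prime. Qed.

Lemma LambdaE n : (1 < n)%N ->
  LambdaStar n = if size (primes n) == 1%N then ln (INR n) else 0.
Proof.
move=> n1; have n0 : (0 < n)%N by apply: ltnW.
rewrite /LambdaStar foldR_sum seqE.
under eq_bigr do rewrite foldR_sum seqE.
under eq_bigr do under eq_bigr do rewrite primebE eqbE powE.
case E: (primes n) => [|p [|p' ps]].
- by move/eqP: E; rewrite primes_eq0 ltnNge n1.
- have pP : p \in primes n by rewrite E inE eqxx.
  have pp : prime p by move: pP; rewrite mem_primes => /and3P[].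
  set a := logn p n.
  have a0 : (0 < a)%N by rewrite logn_gt0.
  have nE : n = (p ^ a)%N := n_ppow n p n0 E.
  have pn : (p <= n)%N by rewrite {1}nE -{1}(expn1 p) leq_pexp2l // prime_gt0.
  have an : (a <= n)%N by rewrite {1}nE; apply: ltnW; apply: ltn_expl; apply: prime_gt1.
  rewrite /= (@sum_single _ p); first last.
  - move=> p' _ ne; apply: big1_seq => a' /andP[_]; rewrite mem_iota => /andP[a'1 _].
    case: ifP => // /andP[pp' /eqP nE'].
    have := ppow_primes n p' a' pp' a'1 nE'; rewrite E => -[] pE.
    by move: ne; rewrite pE eqxx.
  - exact: iota_uniq.
  - by rewrite mem_iota prime_gt1 //=; lia.
  rewrite (@sum_single _ a); first last.
  - move=> a' a'P ne; case: ifP => // /andP[_ /eqP nE'].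
    by move: ne; rewrite /a nE' pfactorK // eqxx.
  - exact: iota_uniq.
  - by rewrite mem_iota a0 /= add1n ltnS.
  rewrite pp -nE eqxx /= {1}nE -powE pow_INR ln_pow //.
  apply: lt_0_INR; apply/ssrnat.ltP; exact: prime_gt0.
- rewrite /= big1_seq // => p0 /andP[_ _]; apply: big1_seq => a' /andP[_]; rewrite mem_iota => /andP[a'1 _].
  case: ifP => // /andP[pp' /eqP nE'].
  by have := ppow_primes n p0 a' pp' a'1 nE'; rewrite E.
Qed.

Notation dv := (fun a b : R => a / b).

Lemma Phi_toC n : (1 < n)%N ->
  toC (PhiStar_at1 n) = real_complex R (gsieve dv (Lq n) 1 (fun D => ((n %/ D)%N)%:R)).
Proof.
move=> n1; have n0 : (0 < n)%N by apply: ltnW.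
have Hw := prim_w n n0.
have gd := good_Lq n n0.
rewrite /PhiStar_at1 toC_fold_mul unitsE //.
under eq_bigr do rewrite toC_sub toC1 toC_zeta.
have -> : iota 1 n = rcons (iota 1 n.-1) n.
  by rewrite -{1}(prednK n0) iota_last add1n prednK.
rewrite filter_rcons.
have -> : all (fun q => ~~ (q %| n)%N) (Lq n) = false.
  case E: (Lq n) => [|q L]; first by move: (Lq_nil n n1); rewrite E.
  by rewrite /= Lq_dvd // E inE eqxx.
rewrite big_filter.
rewrite (eq_bigl (fun j => (1 %| j)%N && all (fun q => ~~ (q %| j)%N) (Lq n))); last first.
  by move=> j; rewrite dvd1n.
have /and4P[pw cp _ _] := gd.
rewrite sieve_prod //; last first.
  move=> j; rewrite mem_iota => /andP[j1 jn]; rewrite subr_eq0 eq_sym -(prim_order_dvd Hw).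
  apply/negP => /(dvdn_leq j1); rewrite leqNgt; move: jn; rewrite add1n prednK // => ->.
  by [].
rewrite (@gsieve_ext n _ _ _ _ _ (fun D => real_complex R (((n %/ D)%N)%:R)) gd); last first.
  move=> D Dn; have D0 : (0 < D)%N by apply: dvdn_gt0 n0 Dn.
  set m := (n %/ D)%N.
  have nE : n = (D * m)%N by rewrite /m mulnC divnK.
  have m0 : (0 < m)%N by rewrite /m divn_gt0 // dvdn_leq.
  rewrite -big_filter {1}nE filter_dvd_iota1 // big_map.
  have Hu : m.-primitive_root (cis (th n) ^+ D).
    have nm : (n %/ m)%N = D by rewrite {1}nE mulnK.
    rewrite -nm; have := dvdn_prim_root Hw (m := m); apply; by rewrite {1}nE dvdn_mull.
  under eq_bigr do rewrite exprM.
  by rewrite (@cyclo_prod _ _ m Hu) rmorph_nat.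
have := @gsieve_morph n _ _ dv (fun a b : R[i] => a / b) (real_complex R) (fun _ => True) _ _
  (fun D => ((n %/ D)%N)%:R) gd (fun _ _ => I).
case.
  by move=> a b _ _; split => //; rewrite fmorph_div.
by move=> _ <-.
Qed.

Lemma Phi_real n : (1 < n)%N ->
  let r := gsieve dv (Lq n) 1 (fun D => ((n %/ D)%N)%:R) in
  Rlt 0 r /\ ln r = gsieve sub (Lq n) 1 (fun D => ln (INR (n %/ D))).
Proof.
move=> n1 r; have n0 : (0 < n)%N by apply: ltnW.
have gd := good_Lq n n0.
have := @gsieve_morph n _ _ dv sub ln (fun x => Rlt 0 x) _ _ (fun D => ((n %/ D)%N)%:R) gd.
case.
- move=> D Dn; rewrite -INRE; apply: lt_0_INR; apply/ssrnat.ltP.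
  by rewrite divn_gt0 ?(dvdn_gt0 n0 Dn) // dvdn_leq.
- move=> a b a0 b0; have bi : Rlt 0 (Rinv b) by apply: Rinv_0_lt_compat.
  have ab : a / b = Rmult a (Rinv b) by [].
  rewrite ab; split; first exact: Rmult_lt_0_compat.
  by rewrite ln_mult // ln_Rinv // RminusE.
move=> H1 H2; split => //; rewrite /r H2.
by apply: gsieve_eq => D; rewrite INRE.
Qed.

Lemma main_aux n : (1 < n)%coq_nat ->
  Un_cv (cstar_series_re n) (Ropp (LambdaStar n)) /\
  Un_cv (cstar_series_im n) 0 /\
  snd (PhiStar_at1 n) = 0 /\
  Rlt 0 (fst (PhiStar_at1 n)) /\
  ln (fst (PhiStar_at1 n)) = LambdaStar n.
Proof.
move=> hn; have n1 : (1 < n)%N by apply/ssrnat.ltP.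
have LE := LambdaE n n1.
have GE := gs_ln n n1.
have [Hpos Hln] := Phi_real n n1.
have PT := Phi_toC n n1.
have E1 : fst (PhiStar_at1 n) = gsieve dv (Lq n) 1 (fun D => ((n %/ D)%N)%:R).
  by have := congr1 (@complex.Re _) PT.
have E2 : snd (PhiStar_at1 n) = 0.
  by have := congr1 (@complex.Im _) PT.
split.
  have := series_re_lim n n1; rewrite gsN GE -LE.
  by [].
split.
  apply: (Un_cv_ext (fun _ => 0)).
    move=> N; rewrite /cstar_series_im; symmetry; apply: sum_eq_R0 => i _.
    by rewrite snd_cstar // /Rdiv Rmult_0_l.
  by move=> eps eps0; exists 0%N => N _; rewrite /R_dist Rminus_0_r Rabs_R0.
split => //.
rewrite E1; split => //.
by rewrite Hln GE -LE.
Qed.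

End H.

Theorem mainTheorem17 (n : nat) (hn : (1 < n)%nat) :
  (* the complex series sum_{k>=1} c*_n(k)/k converges, with sum -Lambda*(n) *)
  Un_cv (cstar_series_re n) (- LambdaStar n) /\
  Un_cv (cstar_series_im n) 0 /\
  (* Phi*_n(1) is a positive real whose logarithm is Lambda*(n) *)
  snd (PhiStar_at1 n) = 0 /\
  0 < fst (PhiStar_at1 n) /\
  ln (fst (PhiStar_at1 n)) = LambdaStar n.
Proof.
  exact (H.main_aux n hn).
Qed.
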